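(* Let $b\ge3$ be an integer and $D \subset \{0,\ldots,b-1\}$ with $2\le\#D\le b-1$; let $C(b,D)$ be the corresponding generalized Cantor set with Hausdorff dimension $\gamma=\log\#D/\log b$, and let $m = \min\{ \min D, b-1-\max D \}$. Let $A=(a_{n})_{n \geq 1}$ be an unbounded non-decreasing sequence of positive integers, let $f$ be a dimension function such that $r\mapsto r^{-\gamma} f(r)$ is monotonic, and let $\psi : \mathbb{N} \to (0,\infty)$. If $$\sum_{i \in I \colon \psi_{A}(i) > \frac{m}{(b-1) b^{ i }}} f\left(\psi_{A}(i) - \frac{m}{(b-1) b^{i}}\right) b^{i \gamma } < \infty,$$ then $\mathcal{H}^{f} (W_{b,A}(\psi) \cap C(b,D))= 0$.
   Context: $C(b,D)$ is the set of $x \in [0,1]$ whose base-$b$ expansion uses only digits from $D$. A dimension function is a continuous, non-decreasing $f:(0,\infty)\to(0,\infty)$ with $\lim_{r\to0}f(r)=0$; $\mathcal{H}^f$ is the Hausdorff $f$-measure. $W_{b,A}(\psi) = \{x \in [0,1] : |x - p/b^{a_n}| < \psi(n) \text{ for infinitely many } (p,n) \in \mathbb{N}^2\}$; $I = \{i\in\mathbb{N} : a_n = i \text{ for some } n\}$; for $i\in I$, $\psi_A(i) = \max\{\psi(n) : a_n = i\}$. *)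

(* Defs.v *)
From HB Require Import structures.
From mathcomp Require Import all_boot all_order all_algebra.
From mathcomp Require Import all_classical all_reals all_analysis.
Set Implicit Arguments. Unset Strict Implicit. Unset Printing Implicit Defensive.
Import Order.TTheory GRing.Theory Num.Theory.
Import numFieldNormedType.Exports.
Local Open Scope classical_set_scope.
Local Open Scope ring_scope.

Definition cantor_set (R : realType) (b : nat) (D : {set 'I_b}) : set R :=
  [set x : R | 0 <= x <= 1 /\
     exists d : nat -> 'I_b, (forall k, d k \in D) /\
       (fun N => \sum_(k < N) ((d k : nat)%:R / (b%:R ^+ k.+1) : R)) @ \oo --> x].

Definition W_set (R : realType) (b : nat) (a : nat -> nat) (psi : nat -> R)
  : set R :=
  [set x : R | 0 <= x <= 1 /\
     infinite_set [set pn : nat * nat | (0 < pn.2)%N /\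
        `| x - (pn.1)%:R / (b%:R ^+ a pn.2) | < psi pn.2]].

Definition idx_set (a : nat -> nat) : set nat :=
  [set i | exists2 n, (0 < n)%N & a n = i].

(* psi_A(i) = max { psi n : a_n = i } (a finite set for i in I) *)
Definition psiA (R : realType) (a : nat -> nat) (psi : nat -> R) (i : nat) : R :=
  sup [set psi n | n in [set n | (0 < n)%N /\ a n = i]].

Definition dimension_function (R : realType) (f : R -> R) : Prop :=
  {within `]0, +oo[, continuous f} /\
  {in `]0, +oo[ &, {homo f : x y / x <= y}} /\
  (forall r, 0 < r -> 0 < f r) /\
  f r @[r --> 0^'+] --> 0.

Definition monotonic_pos (R : realType) (g : R -> R) : Prop :=
  {in `]0, +oo[ &, {homo g : x y / x <= y}} \/
  {in `]0, +oo[ &, {homo g : x y /~ x <= y}}.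

(* Diameter of a subset of R (as an extended real; -oo for the empty set). *)
Definition diam (R : realType) (U : set R) : \bar R :=
  ereal_sup [set (`|x - y|)%:E | x in U & y in U].

(* f(diam U), with the usual convention f(0) = 0 (f extended by its limit 0). *)
Definition fdiam (R : realType) (f : R -> R) (U : set R) : \bar R :=
  if (0 < diam U)%E then (f (fine (diam U)))%:E else 0%E.

Definition hausdorff_delta (R : realType) (f : R -> R) (delta : R) (E : set R)
  : \bar R :=
  ereal_inf [set (\sum_(k <oo) fdiam f (U k))%E |
     U in [set U : nat -> set R |
       E `<=` \bigcup_k U k /\ forall k, (diam (U k) <= delta%:E)%E]].

(* H^f(E) = lim_{delta -> 0} H^f_delta(E) = sup_{delta > 0} H^f_delta(E) *)
Definition hausdorff_measure (R : realType) (f : R -> R) (E : set R) : \bar R :=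
  ereal_sup [set hausdorff_delta f delta E | delta in `]0, +oo[].

(* Main.v *)
Require Import Defs.
From HB Require Import structures.
From mathcomp Require Import all_boot all_order all_algebra.
From mathcomp Require Import all_classical all_reals all_analysis.
From mathcomp Require Import ring lra zify.
Import Order.TTheory GRing.Theory Num.Theory.
Import numFieldNormedType.Exports.
Local Open Scope classical_set_scope.
Local Open Scope ring_scope.
Lemma geom_step (R : realType) (b : nat) (c X : R) :
  (1 < b)%N -> X != 0 ->
  c / ((b.-1)%:R * X) - c / ((b.-1)%:R * (b%:R * X)) = c / (b%:R * X).
Proof.
move=> hb hX.
have hb1 : (b.-1)%:R = b%:R - 1 :> R.
  by rewrite -[X in _ = X%:R - 1](prednK (ltnW hb)) -natr1 addrK.
have hB1 : b%:R - 1 != 0 :> R.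
  by rewrite -hb1 pnatr_eq0 -lt0n -ltnS prednK // ltnW.
have hB : b%:R != 0 :> R by rewrite pnatr_eq0 -lt0n ltnW.
rewrite hb1; field.
by rewrite hX hB hB1.
Qed.

Lemma partial_bounds (R : realType) (b : nat) (lo hi : R) (d : nat -> R) (i : nat) :
  (1 < b)%N -> (forall k, lo <= d k <= hi) ->
  forall j,
  lo / ((b.-1)%:R * b%:R ^+ i) - lo / ((b.-1)%:R * b%:R ^+ (i + j))
    <= \sum_(i <= k < i + j) d k / b%:R ^+ k.+1
    <= hi / ((b.-1)%:R * b%:R ^+ i) - hi / ((b.-1)%:R * b%:R ^+ (i + j)).
Proof.
move=> hb hd; elim=> [|j IH].
  by rewrite addn0 big_geq // !subrr lexx.
have hX : b%:R ^+ (i + j) != 0 :> R by rewrite expf_neq0 // pnatr_eq0 -lt0n ltnW.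
rewrite addnS big_nat_recr ?leq_addr //= exprS.
have e1 := @geom_step R b lo _ hb hX; have e2 := @geom_step R b hi _ hb hX.
move: IH => /andP[IH1 IH2]; have /andP[h1 h2] := hd (i + j).
have hp : 0 < b%:R * b%:R ^+ (i + j) :> R.
  by rewrite mulr_gt0 // ?exprn_gt0 // ltr0n ltnW.
have h1' : lo / (b%:R * b%:R ^+ (i + j)) <= d (i + j) / (b%:R * b%:R ^+ (i + j)).
  by rewrite ler_pM2r ?invr_gt0.
have h2' : d (i + j) / (b%:R * b%:R ^+ (i + j)) <= hi / (b%:R * b%:R ^+ (i + j)).
  by rewrite ler_pM2r ?invr_gt0.
apply/andP; split; lra.
Qed.

Lemma tail_bounds (R : realType) (b : nat) (lo hi : R) (d : nat -> R) (x : R) (i : nat) :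
  (1 < b)%N -> (forall k, lo <= d k <= hi) -> 0 <= lo ->
  (fun N => \sum_(k < N) d k / b%:R ^+ k.+1) @ \oo --> x ->
  lo / ((b.-1)%:R * b%:R ^+ i) <= x - \sum_(k < i) d k / b%:R ^+ k.+1
    <= hi / ((b.-1)%:R * b%:R ^+ i).
Proof.
move=> hb hd lo0 hx.
set S := fun N => \sum_(k < N) d k / b%:R ^+ k.+1.
have hi0 : 0 <= hi by have /andP[h1 h2] := hd 0%N; lra.
have hB : 0 < b%:R :> R by rewrite ltr0n ltnW.
have hb1 : 0 < (b.-1)%:R :> R by rewrite ltr0n -ltnS prednK // ltnW.
have split_sum : forall j, S (i + j)%N - S i = \sum_(i <= k < i + j) d k / b%:R ^+ k.+1.
  move=> j; rewrite /S /= -!(big_mkord xpredT (fun k => d k / b%:R ^+ k.+1)). rewrite (@big_cat_nat _ _ _ i 0 (i + j)) /= ?leq_addr //.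
  by rewrite addrAC subrr add0r.
have cg : (fun N => S N - S i) @ \oo --> x - S i.
  by apply: cvgB => //; exact: cvg_cst.
apply/andP; split.
- have cz : (fun N => lo / (b.-1)%:R * (b%:R^-1) ^+ N) @ \oo --> 0.
    rewrite -(mulr0 (lo / (b.-1)%:R)); apply: cvgMr; apply: cvg_expr.
    rewrite ger0_norm ?invr_ge0 ?ltW // invf_lt1 // ltr1n //.
  have cg2 : (fun N => S N - S i + lo / (b.-1)%:R * (b%:R^-1) ^+ N) @ \oo --> x - S i.
    by rewrite -[x - S i]addr0; exact: cvgD.
  pose L := lo / ((b.-1)%:R * b%:R ^+ i).
  suff H : \forall N \near \oo, L <= S N - S i + lo / (b.-1)%:R * (b%:R^-1) ^+ N.
    have := limr_ge (cvgP _ cg2) H. rewrite (cvg_lim _ cg2) //. apply; exact: _.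
  exists i => //. move=> N /= hN.
  rewrite -(subnKC hN) split_sum /=.
  have /andP[h1 _] := @partial_bounds R b lo hi d i hb hd (N - i).
  have e : lo / (b.-1)%:R * (b%:R^-1) ^+ (i + (N - i)) = lo / ((b.-1)%:R * b%:R ^+ (i + (N - i))).
    by rewrite exprVn invfM mulrA.
  rewrite e /L; lra.
- pose L := hi / ((b.-1)%:R * b%:R ^+ i); suff H : \forall N \near \oo, S N - S i <= L.
    have := limr_le (cvgP _ cg) H. rewrite (cvg_lim _ cg) //. apply; exact: _.
  exists i => //. move=> N /= hN.
  rewrite -(subnKC hN) split_sum /=.
  have /andP[_ h2] := @partial_bounds R b lo hi d i hb hd (N - i).
  apply: (le_trans h2); rewrite lerBlDr lerDl.
  by rewrite divr_ge0 // mulr_ge0 // ?ltW // exprn_ge0 // ltW.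
Qed.
Lemma diam_le (R : realType) (U : set R) (L : R) :
  (forall x y, U x -> U y -> `|x - y| <= L) -> (diam U <= L%:E)%E.
Proof.
move=> h; rewrite /diam; apply: ge_ereal_sup => _ [x Ux [y Uy <-]].
by rewrite lee_fin; exact: h.
Qed.

Lemma fdiam_le0 (R : realType) (f : R -> R) (U : set R) :
  (diam U <= 0)%E -> fdiam f U = 0%E.
Proof. by move=> h; rewrite /fdiam ltNge h. Qed.

Lemma fdiam_set0 (R : realType) (f : R -> R) : fdiam f set0 = 0%E.
Proof. by apply: fdiam_le0; apply: (@diam_le R set0 0) => x y []. Qed.

Lemma fdiam_ge0 (R : realType) (f : R -> R) (U : set R) (L : R) :
  (forall r, 0 < r -> 0 < f r) -> (diam U <= L%:E)%E -> (0 <= fdiam f U)%E.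
Proof.
move=> fpos hL; rewrite /fdiam; case: ifPn => // h.
move: h hL; case: (diam U) => [r| |] //= h _.
by rewrite lee_fin ltW // fpos // -lte_fin.
Qed.

Lemma fdiam_le (R : realType) (f : R -> R) (U : set R) (L : R) :
  0 < L -> (forall r, 0 < r -> 0 < f r) ->
  {in `]0, +oo[ &, {homo f : x y / x <= y}} ->
  (forall x y, U x -> U y -> `|x - y| <= L) -> (fdiam f U <= (f L)%:E)%E.
Proof.
move=> L0 fpos fmono h; have hL := @diam_le R U L h.
rewrite /fdiam; case: ifPn => hd; last by rewrite lee_fin ltW // fpos.
move: hd hL; case: (diam U) => [r| |] //= hr hrL.
rewrite lee_fin; apply: fmono; rewrite ?in_itv /= ?andbT -?lte_fin -?lee_fin //.
Qed.

Lemma dist_interval (R : realType) (U : set R) (c lo hi : R) :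
  (forall x, U x -> lo <= x - c <= hi) ->
  forall x y, U x -> U y -> `|x - y| <= hi - lo.
Proof.
move=> h x y Ux Uy; have /andP[h1 h2] := h x Ux; have /andP[h3 h4] := h y Uy.
rewrite ler_norml; apply/andP; split; lra.
Qed.

Section Digits.
Variables (R : realType) (b : nat) (D : {set 'I_b}) (m : nat).
Hypothesis hb : (1 < b)%N.
Hypothesis hm : forall k : 'I_b, k \in D -> (m <= k)%N /\ (k + m <= b.-1)%N.

Definition Dsub := {x : 'I_b | x \in D}.
Definition word i := {ffun 'I_i -> Dsub}.
Definition wval i (w : word i) : R :=
  \sum_(k < i) ((val (w k) : 'I_b) : nat)%:R / b%:R ^+ k.+1.
Definition expands (x : R) (d : nat -> 'I_b) :=
  (forall k, d k \in D) /\
  (fun N => \sum_(k < N) ((d k : nat)%:R / (b%:R ^+ k.+1) : R)) @ \oo --> x.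
Definition pref i (w : word i) (d : nat -> 'I_b) :=
  forall k (hk : (k < i)%N), d k = val (w (Ordinal hk)).
Definition TLs i (w : word i) (t : R) : set R :=
  [set x | (exists d, expands x d /\ pref i w d) /\ x - wval i w < t].
Definition TRs i (w : word i) (t : R) : set R :=
  [set x | (exists d, expands x d /\ pref i w d) /\ wval i w + 1 / b%:R ^+ i - x < t].
Definition mm i : R := m%:R / ((b.-1)%:R * b%:R ^+ i).

Lemma wval_bounds i (w : word i) x d : expands x d -> pref i w d ->
  mm i <= x - wval i w <= 1 / b%:R ^+ i - mm i.
Proof.
move=> [hd hx] hp.
have hmb : (m <= b.-1)%N.
  have /hm [_ h] := hd 0%N; exact: leq_trans (leq_addl _ _) h.
have hdig : forall k : nat, (m%:R <= (d k : nat)%:R :> R) && ((d k : nat)%:R <= (b.-1 - m)%:R :> R).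
  move=> k; have /hm [h1 h2] := hd k.
  by rewrite !ler_nat h1 /= leq_subRL // addnC.
have := @tail_bounds R b m%:R (b.-1 - m)%:R (fun k => (d k : nat)%:R) x i hb hdig (ler0n _ _) hx.
have -> : \sum_(k < i) (d k : nat)%:R / b%:R ^+ k.+1 = wval i w :> R.
  apply: eq_bigr => k _; rewrite (hp k (ltn_ord k)); congr (_%:R / _).
  by congr (val (val (w _))); apply: val_inj.
have -> : (b.-1 - m)%:R / ((b.-1)%:R * b%:R ^+ i) = 1 / b%:R ^+ i - mm i :> R.
  have hb1 : (b.-1)%:R != 0 :> R by rewrite pnatr_eq0 -lt0n -ltnS prednK // ltnW.
  have hX : b%:R ^+ i != 0 :> R by rewrite expf_neq0 // pnatr_eq0 -lt0n ltnW.
  rewrite /mm natrB //; field; by rewrite hb1 hX.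
by [].
Qed.

Lemma TL_dist i (w : word i) t x y : TLs i w t x -> TLs i w t y ->
  `|x - y| <= t - mm i /\ `|x - y| <= 1 / b%:R ^+ i.
Proof.
move=> hx hy.
have B : forall z, TLs i w t z -> mm i <= z - wval i w <= 1 / b%:R ^+ i - mm i /\ z - wval i w < t.
  by move=> z [[d [hd hp]] hz]; split => //; exact: wval_bounds hd hp.
have m0 : 0 <= mm i.
  by rewrite /mm divr_ge0 // mulr_ge0 // exprn_ge0.
split.
- apply: (@dist_interval R (TLs i w t) (wval i w) (mm i) t) => // z /B [/andP[h1 h2] h3].
  by rewrite h1 /= ltW.
- have h := @dist_interval R (TLs i w t) (wval i w) (mm i) (1 / b%:R ^+ i - mm i)
    (fun z hz => proj1 (B z hz)) x y hx hy.
  lra.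
Qed.
Lemma TR_dist i (w : word i) t x y : TRs i w t x -> TRs i w t y ->
  `|x - y| <= t - mm i /\ `|x - y| <= 1 / b%:R ^+ i.
Proof.
move=> hx hy.
have B : forall z, TRs i w t z -> mm i <= z - wval i w <= 1 / b%:R ^+ i - mm i /\
   wval i w + 1 / b%:R ^+ i - z < t.
  by move=> z [[d [hd hp]] hz]; split => //; exact: wval_bounds hd hp.
have m0 : 0 <= mm i.
  by rewrite /mm divr_ge0 // mulr_ge0 // exprn_ge0.
split.
- have h := @dist_interval R (TRs i w t) (wval i w + 1 / b%:R ^+ i) (- t) (- mm i)
    (fun z hz => match B z hz with conj h1 h2 => ltac:(move/andP: h1 => [h11 h12]; apply/andP; split; lra) end) x y hx hy.
  lra.
- have h := @dist_interval R (TRs i w t) (wval i w + 1 / b%:R ^+ i) (mm i - 1 / b%:R ^+ i) (- mm i)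
    (fun z hz => match B z hz with conj h1 h2 => ltac:(move/andP: h1 => [h11 h12]; apply/andP; split; lra) end) x y hx hy.
  lra.
Qed.
Definition lev i (t : R) : seq (set R) :=
  map (fun w => TLs i w t) (enum {: word i}) ++ map (fun w => TRs i w t) (enum {: word i}).

Lemma card_word i : #|{: word i}| = (#|D| ^ i)%N.
Proof.
rewrite card_ffun card_ord card_sig; congr (_ ^ _)%N; exact: eq_card.
Qed.

Lemma lev_elem i t j : (j < size (lev i t))%N ->
  exists w, nth set0 (lev i t) j = TLs i w t \/ nth set0 (lev i t) j = TRs i w t.
Proof.
rewrite /lev; move: (enum {: word i}) => e.
rewrite size_cat !size_map nth_cat size_map => hj.
have w0 : word i.
  by move: hj; case: e => [|w0 e'] //=.
case: ifP => hj2.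
  by exists (nth w0 e j); left; rewrite (nth_map w0).
exists (nth w0 e (j - size e)); right.
rewrite (nth_map w0) // ltn_subLR //; by rewrite leqNgt hj2.
Qed.

Lemma lev_hit i t (w : word i) :
  (exists j, (j < size (lev i t))%N /\ nth set0 (lev i t) j = TLs i w t) /\
  (exists j, (j < size (lev i t))%N /\ nth set0 (lev i t) j = TRs i w t).
Proof.
have : w \in enum {: word i} by rewrite mem_enum.
rewrite /lev; move: (enum {: word i}) => e wi.
have hidx := wi; rewrite -index_mem in hidx.
split.
  exists (index w e); split.
    by rewrite size_cat size_map (leq_trans hidx) // leq_addr.
  by rewrite nth_cat size_map hidx (nth_map w) // nth_index.
exists (size e + index w e)%N; split.
  by rewrite size_cat !size_map ltn_add2l.
by rewrite nth_cat size_map ltnNge leq_addr /= addKn (nth_map w) // nth_index.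
Qed.

Lemma sum_const_seq (T : Type) (e : seq T) (c : R) :
  (\sum_(w <- e) c%:E = (c *+ size e)%:E)%E.
Proof. by elim: e => [|x e IH]; rewrite ?big_nil ?big_cons ?IH ?mulrS ?EFinD. Qed.

Lemma lev_sum (f : R -> R) i t : mm i < t ->
  (forall r, 0 < r -> 0 < f r) ->
  {in `]0, +oo[ &, {homo f : x y / x <= y}} ->
  (\sum_(X <- lev i t) fdiam f X <= ((#|D| ^ i)%:R * 2 * f (t - mm i))%:E)%E.
Proof.
move=> ht fpos fmono.
have r0 : 0 < t - mm i by rewrite subr_gt0.
have : size (enum {: word i}) = (#|D| ^ i)%N by rewrite -cardE card_word.
rewrite /lev; move: (enum {: word i}) => e he.
rewrite big_cat /= !big_map.
have h1 : (\sum_(w <- e) fdiam f (TLs i w t) <= \sum_(w <- e) (f (t - mm i))%:E)%E.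
  apply: lee_sum => w _; apply: fdiam_le => // x y hx hy.
  by have [] := @TL_dist i w t x y hx hy.
have h2 : (\sum_(w <- e) fdiam f (TRs i w t) <= \sum_(w <- e) (f (t - mm i))%:E)%E.
  apply: lee_sum => w _; apply: fdiam_le => // x y hx hy.
  by have [] := @TR_dist i w t x y hx hy.
apply: le_trans (leeD h1 h2) _.
rewrite sum_const_seq he -EFinD lee_fin -mulr_natl; lra.
Qed.
End Digits.
Arguments wval R {b D i}.
Arguments TLs {R b D i}.
Arguments TRs {R b D i}.
Arguments pref {b D i}.
Arguments expands {R b} D.

Lemma p_bound (R : realType) (b : nat) (a : nat -> nat) (psi : nat -> R) (x : R) :
  (1 < b)%N -> x <= 1 -> forall n0, exists P, forall n p, (n < n0)%N ->
  `|x - p%:R / b%:R ^+ a n| < psi n -> (p < P)%N.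
Proof.
move=> hb x1; elim=> [|n0 [P IH]]; first by exists 0%N.
have hB : 0 < b%:R ^+ a n0 :> R by rewrite exprn_gt0 // ltr0n ltnW.
have h0 : 0 <= (1 + `|psi n0|) * b%:R ^+ a n0 by rewrite mulr_ge0 // ?ltW // addr_ge0.
exists (maxn P (Num.Def.archi_bound ((1 + `|psi n0|) * b%:R ^+ a n0))) => n p.
rewrite ltnS leq_eqVlt => /orP[/eqP ->|hn] hp; last first.
  by rewrite leq_max (IH n p hn hp).
rewrite leq_max; apply/orP; right; rewrite -(ltr_nat R).
apply: le_lt_trans (archi_boundP h0).
have : p%:R / b%:R ^+ a n0 <= 1 + `|psi n0|.
  have h1 : p%:R / b%:R ^+ a n0 - x <= `|x - p%:R / b%:R ^+ a n0|.
    by rewrite distrC ler_norm.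
  have h2 : psi n0 <= `|psi n0| by exact: ler_norm.
  lra.
by rewrite ler_pdivrMr.
Qed.

Lemma psi_le_psiA (R : realType) (a : nat -> nat) (psi : nat -> R) :
  (forall n1 n2, (0 < n1)%N -> (n1 <= n2)%N -> (a n1 <= a n2)%N) ->
  (forall M, exists2 n, (0 < n)%N & (M < a n)%N) ->
  forall n, (0 < n)%N -> psi n <= psiA a psi (a n).
Proof.
move=> hmono hunb n hn; rewrite /psiA.
have [n1 hn1 hin1] := hunb (a n).
apply: ub_le_sup; last by exists n.
exists (\sum_(k < n1) `|psi k|) => _ [n' [hn' hai] <-].
have hlt : (n' < n1)%N.
  rewrite ltnNge; apply/negP => h.
  by have := hmono _ _ hn1 h; rewrite hai leqNgt hin1.
rewrite (bigD1 (Ordinal hlt)) //=.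
apply: le_trans (ler_norm _) _; rewrite lerDl.
by apply: sumr_ge0 => k _.
Qed.

Lemma wval_nat (R : realType) (b : nat) (D : {set 'I_b}) i (d : nat -> 'I_b) (w : word b D i) :
  (1 < b)%N -> pref w d ->
  (\sum_(k < i) (d k : nat) * b ^ (i - k.+1))%N%:R = wval R w * b%:R ^+ i.
Proof.
move=> hb hp.
rewrite natr_sum /wval mulr_suml; apply: eq_bigr => k _.
rewrite natrM natrX (hp k (ltn_ord k)).
have -> : Ordinal (ltn_ord k) = k by apply: val_inj.
have hX : b%:R ^+ (i - k.+1) != 0 :> R by rewrite expf_neq0 // pnatr_eq0 -lt0n ltnW.
have hY : b%:R ^+ k.+1 != 0 :> R by rewrite expf_neq0 // pnatr_eq0 -lt0n ltnW.
have -> : b%:R ^+ i = b%:R ^+ (i - k.+1) * b%:R ^+ k.+1 :> R.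
  by rewrite -exprD subnK.
by field.
Qed.

Lemma in_level (R : realType) (b : nat) (D : {set 'I_b}) (m : nat)
  (a : nat -> nat) (psi : nat -> R) :
  (1 < b)%N ->
  (forall k : 'I_b, k \in D -> (m <= k)%N /\ (k + m <= b.-1)%N) ->
  (forall n1 n2, (0 < n1)%N -> (n1 <= n2)%N -> (a n1 <= a n2)%N) ->
  (forall M, exists2 n, (0 < n)%N & (M < a n)%N) ->
  forall x, W_set b a psi x -> @cantor_set R b D x -> forall N,
  exists i, [/\ (N <= i)%N, idx_set a i, mm R b m i < psiA a psi i &
    exists w : word b D i, TLs w (psiA a psi i) x \/ TRs w (psiA a psi i) x].
Proof.
move=> hb hm hmono hunb x [/andP[x0 x1] hinf] [_ [d [hd hx]]] N.
have [n0 hn0 hNn0] := hunb N.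
have [P hP] := @p_bound R b a psi x hb x1 n0.
have [[p n] [[/= hn hpn] hnn0]] : exists pn : nat * nat,
    ((0 < pn.2)%N /\ `| x - (pn.1)%:R / (b%:R ^+ a pn.2) | < psi pn.2) /\ (n0 <= pn.2)%N.
  apply/not_existsP => hno; apply: hinf.
  apply: (sub_finite_set _ (finite_setX (finite_II P) (finite_II n0))).
  move=> [p n] /= [hn hpn].
  have hlt : (n < n0)%N.
    by rewrite ltnNge; apply/negP => h; apply: (hno (p, n)).
  by split => //=; exact: hP hlt hpn.
set i := a n.
have hNi : (N <= i)%N.
  by apply: leq_trans (ltnW hNn0) _; exact: hmono.
have hpsi : psi n <= psiA a psi i by exact: psi_le_psiA.
pose w : word b D i := [ffun k : 'I_i => (exist (fun y : 'I_b => y \in D) (d k) (hd k))].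
have hpref : pref w d by move=> k hk; rewrite ffunE.
have hexp : expands D x d by split.
have /andP[hlo hhi] := @wval_bounds R b D m hb hm i w x d hexp hpref.
set Q := (\sum_(k < i) (d k : nat) * b ^ (i - k.+1))%N.
have hQ := @wval_nat R b D i d w hb hpref; rewrite -/Q in hQ.
have hB : 0 < b%:R ^+ i :> R by rewrite exprn_gt0 // ltr0n ltnW.
have hW : wval R w = Q%:R / b%:R ^+ i by rewrite hQ mulfK // gt_eqF.
have hd1 : x - p%:R / b%:R ^+ i <= `|x - p%:R / b%:R ^+ i| by exact: ler_norm.
have hd2 : p%:R / b%:R ^+ i - x <= `|x - p%:R / b%:R ^+ i| by rewrite distrC ler_norm.
exists i; split => //; first by exists n.
- case: (leqP p Q) => hpQ.
  + have : p%:R / b%:R ^+ i <= wval R w by rewrite hW ler_pM2r ?invr_gt0 // ler_nat.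
    move=> h; lra.
  + have : wval R w + 1 / b%:R ^+ i <= p%:R / b%:R ^+ i.
      by rewrite hW -mulrDl natr1 ler_pM2r ?invr_gt0 // ler_nat.
    move=> h; lra.
- exists w; case: (leqP p Q) => hpQ.
  + left; split; first by exists d.
    have : p%:R / b%:R ^+ i <= wval R w by rewrite hW ler_pM2r ?invr_gt0 // ler_nat.
    move=> h; lra.
  + right; split; first by exists d.
    have : wval R w + 1 / b%:R ^+ i <= p%:R / b%:R ^+ i.
      by rewrite hW -mulrDl natr1 ler_pM2r ?invr_gt0 // ler_nat.
    move=> h; lra.
Qed.
Section Cover.
Variables (R : realType) (T : Type) (s : nat -> seq (set T)) (g : set T -> \bar R).
Hypothesis g0 : g set0 = 0%E.
Hypothesis gge0 : forall i j, (j < size (s i))%N -> (0 <= g (nth set0 (s i) j))%E.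

Let s' i := set0 :: s i.
Let L n := flatten (map s' (iota 0 n)).
Definition coverU k := nth set0 (L k.+1) k.

Let LD n p : L (n + p) = L n ++ flatten (map s' (iota n p)).
Proof. by rewrite /L iotaD map_cat flatten_cat. Qed.

Let LS n : L n.+1 = L n ++ s' n.
Proof. by rewrite -addn1 LD /= cats0. Qed.

Let size_L n : (n <= size (L n))%N.
Proof.
elim: n => [|n IH] //; rewrite LS size_cat /= addnS ltnS.
exact: leq_trans IH (leq_addr _ _).
Qed.

Let nth_L n n' k : (n <= n')%N -> (k < size (L n))%N ->
  nth set0 (L n') k = nth set0 (L n) k.
Proof. by move=> nn' kn; rewrite -(subnKC nn') LD nth_cat kn. Qed.

Let U_L n k : (k < n)%N -> coverU k = nth set0 (L n) k.
Proof.
move=> kn; rewrite /coverU (@nth_L k.+1 n k kn) //.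
Qed.

Let U_L' n k : (k < size (L n))%N -> coverU k = nth set0 (L n) k.
Proof.
move=> kn; rewrite /coverU; case: (leqP k.+1 n) => h.
  by rewrite (@nth_L k.+1 n k h) // (leq_trans _ (size_L k.+1)).
by rewrite (@nth_L n k.+1 k (ltnW h) kn).
Qed.

Let elem_L n k : nth set0 (L n) k = set0 \/
  exists i j, (j < size (s i))%N /\ nth set0 (L n) k = nth set0 (s i) j.
Proof.
elim: n k => [|n IH] k; first by left; rewrite nth_nil.
rewrite LS nth_cat; case: ifP => _; first exact: IH.
case: (k - size (L n))%N => [|j] /=; first by left.
case: (ltnP j (size (s n))) => hj; first by right; exists n, j.
by left; rewrite nth_default.
Qed.

Lemma coverU_elem k : coverU k = set0 \/
  exists i j, (j < size (s i))%N /\ coverU k = nth set0 (s i) j.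
Proof. exact: elem_L. Qed.

Lemma coverU_hit i j : (j < size (s i))%N -> exists k, coverU k = nth set0 (s i) j.
Proof.
move=> hj; exists (size (L i) + j.+1)%N.
have hk : (size (L i) + j.+1 < size (L i.+1))%N.
  by rewrite LS size_cat /= ltn_add2l ltnS.
rewrite (@U_L' i.+1) //.
by rewrite LS nth_cat ltnNge leq_addr /= addKn.
Qed.

Let gL n k : (0 <= g (nth set0 (L n) k))%E.
Proof.
case: (elem_L n k) => [->|[i [j [hj ->]]]]; first by rewrite g0.
exact: gge0.
Qed.

Lemma coverU_sum n :
  (\sum_(k < n) g (coverU k) <= \sum_(i < n) \sum_(X <- s i) g X)%E.
Proof.
have -> : (\sum_(k < n) g (coverU k) = \sum_(k < n) g (nth set0 (L n) k))%E.
  by apply: eq_bigr => k _; rewrite (@U_L n k (ltn_ord k)).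
have -> : (\sum_(i < n) \sum_(X <- s i) g X = \sum_(X <- L n) g X)%E.
  rewrite /L big_flatten big_map /= -(big_mkord xpredT (fun i => \sum_(X <- s i) g X)).
  rewrite /index_iota subn0; apply: eq_bigr => i _.
  by rewrite big_cons g0 add0e.
rewrite (big_nth set0) -(big_mkord xpredT (fun k => g (nth set0 (L n) k))).
rewrite (@big_cat_nat _ _ _ n 0 (size (L n))) /= ?size_L //.
by apply: leeDl; apply: sume_ge0 => k _; exact: gL.
Qed.

End Cover.

Lemma bigmin_le (I : eqType) (r : seq I) (P : pred I) (F : I -> nat) x0 k :
  k \in r -> P k -> (\big[minn/x0]_(i <- r | P i) F i <= F k)%N.
Proof.
elim: r => // y r IH; rewrite inE big_cons => /orP[/eqP <-|kr] Pk.
  by rewrite Pk geq_minl.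
case: ifP => _; last exact: IH.
by apply: leq_trans (geq_minr _ _) _; exact: IH.
Qed.

Theorem lemma4p2 (R : realType) (b : nat) (D : {set 'I_b})
  (a : nat -> nat) (f : R -> R) (psi : nat -> R) :
  (3 <= b)%N ->
  (2 <= #|D|)%N -> (#|D| <= b.-1)%N ->
  let gamma : R := ln (#|D|%:R) / ln (b%:R) in
  let m : nat := minn (\big[minn/b]_(d in D) (d : nat))
                      (b.-1 - \max_(d in D) (d : nat)) in
  (forall n, (0 < n)%N -> (0 < a n)%N) ->
  (forall n1 n2, (0 < n1)%N -> (n1 <= n2)%N -> (a n1 <= a n2)%N) ->
  (forall M, exists2 n, (0 < n)%N & (M < a n)%N) ->
  dimension_function f ->
  monotonic_pos (fun r => r `^ (- gamma) * f r) ->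
  (forall n, (0 < n)%N -> 0 < psi n) ->
  (\sum_(i <oo | (i \in idx_set a) &&
                 (psiA a psi i > m%:R / ((b.-1)%:R * b%:R ^+ i))%R)
     ((f (psiA a psi i - m%:R / ((b.-1)%:R * b%:R ^+ i))
        * (b%:R `^ (i%:R * gamma)))%:E) < +oo)%E ->
  hausdorff_measure f (W_set b a psi `&` @cantor_set R b D) = 0%E.
Proof.
move=> hb3 hD2 hDb gamma m ha0 hmono hunb [_ [fmono [fpos _]]] _ _ hsum.
have hb : (1 < b)%N by apply: leq_trans hb3.
have hm : forall k : 'I_b, k \in D -> (m <= k)%N /\ (k + m <= b.-1)%N.
  move=> k kD; split.
    rewrite /m; apply: leq_trans (geq_minl _ _) _.
    by apply: bigmin_le => //; rewrite mem_index_enum.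
  have h1 : (k <= \max_(d in D) (d : nat))%N by exact: (leq_bigmax_cond (F := fun d : 'I_b => (d : nat))).
  have h2 : (\max_(d in D) (d : nat) <= b.-1)%N.
    by apply/bigmax_leqP => d _; rewrite -ltnS prednK ?ltn_ord // ltnW.
  have h3 : (m <= b.-1 - \max_(d in D) (d : nat))%N by exact: geq_minr.
  lia.
have hB : 0 < b%:R :> R by rewrite ltr0n ltnW.
have hpow : forall i : nat, b%:R `^ (i%:R * gamma) = (#|D| ^ i)%N%:R :> R.
  move=> i; have hlnb : 0 < ln (b%:R : R) by apply: ln_gt0; rewrite ltr1n.
  have hD0 : 0 < #|D|%:R :> R by rewrite ltr0n (leq_trans _ hD2).
  rewrite -{1}(lnK (x := b%:R) hB) -expRM.
  have -> : ln (b%:R : R) * (i%:R * gamma) = i%:R * ln (#|D|%:R : R).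
    by rewrite /gamma; field; rewrite gt_eqF.
  by rewrite expRM_natl (lnK hD0) natrX.
set P := fun i => (i \in idx_set a) && (mm R b m i < psiA a psi i).
set F := fun i => f (psiA a psi i - mm R b m i) * b%:R `^ (i%:R * gamma).
have F0 : forall i, P i -> (0 <= (F i)%:E)%E.
  move=> i /andP[_ hi]; rewrite lee_fin /F mulr_ge0 // ?powR_ge0 // ltW // fpos //.
  by rewrite subr_gt0.
have tcvg := nneseries_tail_cvg hsum F0.
set E := W_set b a psi `&` @cantor_set R b D.
have Hge0 : forall delta, (0 <= hausdorff_delta f delta E)%E.
  move=> delta; apply: le_ereal_inf_tmp => _ [U [hcov hdiam] <-].
  by apply: nneseries_ge0 => k _ _; exact: fdiam_ge0 (hdiam k).
have Hle : forall delta, 0 < delta -> (hausdorff_delta f delta E <= 0)%E.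
  move=> delta hdel; apply/lee_addgt0Pr => e he; rewrite add0e.
  have [hfin hc] := (fine_cvgP _ _).1 tcvg.
  have he2 : 0 < e / 2 by rewrite divr_gt0.
  have h1 := cvgr_lt _ hc _ he2.
  have cB : (fun n => (b%:R^-1) ^+ n) @ \oo --> (0 : R).
    by apply: cvg_expr; rewrite ger0_norm ?invr_ge0 ?ltW // invf_lt1 // ltr1n.
  have h2 := cvgr_lt _ cB _ hdel.
  case: hfin => N1 _ hN1; case: h1 => N2 _ hN2; case: h2 => N3 _ hN3.
  pose N := maxn N1 (maxn N2 N3).
  have tailN : (\sum_(N <= k <oo | P k) (F k)%:E <= (e / 2)%:E)%E.
    have hNN1 : (N1 <= N)%N by rewrite leq_maxl.
    have hNN2 : (N2 <= N)%N by rewrite /N (leq_trans (leq_maxl N2 N3)) // leq_maxr.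
    have := hN1 N hNN1; have := hN2 N hNN2; rewrite /= => hlt hfN.
    by rewrite -(fineK hfN) lee_fin ltW.
  have BN : 1 / b%:R ^+ N <= delta.
    have hNN3 : (N3 <= N)%N by rewrite /N (leq_trans (leq_maxr N2 N3)) // leq_maxr.
    have := hN3 N hNN3; rewrite /= => h.
    by rewrite div1r -exprVn ltW.
  have Bi : forall i, (N <= i)%N -> 1 / b%:R ^+ i <= delta.
    move=> i hi; apply: le_trans BN; rewrite !div1r -!exprVn.
    by apply: ler_wiXn2l => //; apply: ltW; rewrite invf_lt1 // ltr1n.
  pose s := fun i => if (N <= i)%N && P i then lev R b D i (psiA a psi i) else [::].
  have Hlev : forall i j, (j < size (s i))%N ->
      (N <= i)%N /\ (diam (nth set0 (s i) j) <= (1 / b%:R ^+ i)%:E)%E.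
    move=> i j; rewrite /s; case: ifP => // /andP[hNi _] hj; split => //.
    have [w [->|->]] := @lev_elem R b D i _ j hj; apply: diam_le => x y hx hy.
      by have [] := @TL_dist R b D m hb hm i w _ x y hx hy.
    by have [] := @TR_dist R b D m hb hm i w _ x y hx hy.
  have g0 : fdiam f set0 = 0%E := @fdiam_set0 R f.
  have gge0 : forall i j, (j < size (s i))%N -> (0 <= fdiam f (nth set0 (s i) j))%E.
    move=> i j hj; have [_ hd] := Hlev i j hj; exact: (@fdiam_ge0 R f _ _ fpos hd).
  pose U := coverU R s.
  have Udiam : forall k, (diam (U k) <= delta%:E)%E.
    move=> k; rewrite /U; case: (coverU_elem R s k) => [->|[i [j [hj ->]]]].
      apply: le_trans (@diam_le R set0 0 _) _; first by move=> x y [].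
      by rewrite lee_fin ltW.
    have [hNi hd] := Hlev i j hj; apply: le_trans hd _; rewrite lee_fin; exact: Bi.
  have Ucov : E `<=` \bigcup_k U k.
    move=> x [hW hC].
    have [i [hNi hI hlt [w hw]]] := @in_level R b D m a psi hb hm hmono hunb x hW hC N.
    have hsi : s i = lev R b D i (psiA a psi i).
      by rewrite /s hNi /P /= (mem_set hI) hlt.
    have [[j1 [hj1 e1]] [j2 [hj2 e2]]] := @lev_hit R b D i (psiA a psi i) w.
    case: hw => hw.
      have hj : (j1 < size (s i))%N by rewrite hsi.
      have [k hk] := coverU_hit R s i _ hj.
      by exists k => //; rewrite /U hk hsi e1.
    have hj : (j2 < size (s i))%N by rewrite hsi.
    have [k hk] := coverU_hit R s i _ hj.
    by exists k => //; rewrite /U hk hsi e2.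
  pose h := fun i => if (N <= i)%N && P i then F i else 0.
  have hlevsum : forall i, (\sum_(X <- s i) fdiam f X <= (2 * h i)%:E)%E.
    move=> i; rewrite /s /h; case: ifP => [/andP[_ /andP[_ hi]]|_]; last first.
      by rewrite big_nil mulr0.
    apply: le_trans (@lev_sum R b D m hb hm f i _ hi fpos fmono) _.
    by rewrite lee_fin /F hpow; lra.
  have hhsum : forall n, \sum_(i < n) h i <= e / 2.
    move=> n; rewrite -lee_fin -sumEFin.
    have -> : (\sum_(i < n) (h i)%:E = \sum_(0 <= i < n | (N <= i)%N && P i) (F i)%:E)%E.
      rewrite [RHS]big_mkord [RHS]big_mkcond /=; apply: eq_bigr => i _.
      by rewrite /h; case: ifP.
    apply: le_trans tailN.
    case: (leqP N n) => hNn.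
      rewrite (@big_cat_nat _ _ _ N 0 n) //= big_nat_cond big1 ?add0e; last first.
        by move=> i /andP[/andP[_ hi] /andP[hNi _]]; move: hi; rewrite ltnNge hNi.
      have -> : (\sum_(N <= i < n | (N <= i)%N && P i) (F i)%:E =
                 \sum_(N <= i < n | P i) (F i)%:E)%E.
        rewrite big_nat_cond [RHS]big_nat_cond; apply: eq_bigl => i.
        by case: (N <= i < n)%N / andP => [[-> _]|].
      by apply: nneseries_lim_ge => k _ Pk; exact: F0.
    rewrite big_nat_cond big1; last first.
      by move=> i /andP[/andP[_ hi] /andP[hNi _]]; move: hNn; rewrite ltnNge (leq_trans hNi (ltnW hi)).
    by apply: nneseries_ge0 => k _ Pk; exact: F0.
  have Usum : (\sum_(k <oo) fdiam f (U k) <= e%:E)%E.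
    apply: lime_le.
      by apply: is_cvg_nneseries => k _ _; exact: (@fdiam_ge0 R f _ _ fpos (Udiam k)).
    apply: nearW => n /=; rewrite big_mkord.
    apply: le_trans (@coverU_sum R R s (fdiam f) g0 gge0 n) _.
    apply: (@le_trans _ _ (\sum_(i < n) (2 * h i)%:E)%E); first by apply: lee_sum => i _; exact: hlevsum.
    rewrite sumEFin lee_fin -mulr_sumr.
    have := hhsum n; lra.
  apply: le_trans Usum; apply: ereal_inf_lbound; exists U => //; split => //.
rewrite /hausdorff_measure; apply/eqP; rewrite eq_le; apply/andP; split.
  apply: ge_ereal_sup => _ [delta hd <-]; apply: Hle.
  by move: hd; rewrite /= in_itv /= andbT.
apply: le_trans (Hge0 1) _; apply: ereal_sup_ubound; exists 1 => //.
by rewrite /= in_itv /= ltr01.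
Qed.
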